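(* Let $A,C\in\mathbb{C}^{n\times n}$ be Hermitian positive semidefinite, let $B\in\mathbb{C}^{n\times n}$ be invertible, and let $H=\begin{bmatrix} A & B\\ B^* & -C\end{bmatrix}$. Set \[ \alpha=\sup_{x\neq 0}\frac{x^*Ax}{x^*\sqrt{BB^*}x},\qquad \gamma=\sup_{x\neq 0}\frac{x^*Cx}{x^*\sqrt{B^*B}x}. \] Then $H$ is invertible and \[ \|H^{-1}\|\le \|B^{-1}\|\bigl(1+\max\{\alpha,\gamma\}+\alpha\gamma\bigr). \]
   Context: $\|\cdot\|$ is the spectral norm and $\sqrt{X}$ the positive semidefinite square root of a positive semidefinite matrix $X$. *)

(* Defs.v *)
From HB Require Import structures.
From mathcomp Require Import all_boot all_order all_algebra.
From mathcomp Require Import all_classical all_reals.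
From mathcomp Require Import complex.
Set Implicit Arguments. Unset Strict Implicit. Unset Printing Implicit Defensive.
Import Order.TTheory GRing.Theory Num.Theory.
Local Open Scope ring_scope.
Local Open Scope classical_set_scope.

Definition ctmx (R : rcfType) m n (M : 'M[R[i]]_(m, n)) : 'M[R[i]]_(n, m) :=
  (map_mx Num.conj M)^T.

Definition hpsd (R : rcfType) n (M : 'M[R[i]]_n) : Prop :=
  ctmx M = M /\ forall x : 'cV[R[i]]_n, 0 <= (ctmx x *m M *m x) 0 0.

(* the positive semidefinite square root of a PSD matrix X
   (the unique hpsd S with S * S = X) *)
Definition psd_sqrt (R : rcfType) n (X : 'M[R[i]]_n) : 'M[R[i]]_n :=
  xget 0 [set S | hpsd S /\ S *m S = X].

Definition qform (R : rcfType) n (M : 'M[R[i]]_n) (x : 'cV[R[i]]_n) : R :=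
  complex.Re ((ctmx x *m M *m x) 0 0).

Definition vnorm (R : rcfType) n (x : 'cV[R[i]]_n) : R :=
  Num.sqrt (complex.Re ((ctmx x *m x) 0 0)).

Definition specnorm (R : realType) m n (M : 'M[R[i]]_(m, n)) : R :=
  sup [set r : R | exists x : 'cV[R[i]]_n, x != 0 /\ r = vnorm (M *m x) / vnorm x].

Definition rayleigh_sup (R : realType) n (M S : 'M[R[i]]_n) : R :=
  sup [set r : R | exists x : 'cV[R[i]]_n, x != 0 /\ r = qform M x / qform S x].

(* Main.v *)
Require Import Defs.
From HB Require Import structures.
From mathcomp Require Import all_boot all_order all_algebra.
From mathcomp Require Import all_classical all_reals.
From mathcomp Require Import complex.
From mathcomp Require Import ring lra.
Import Order.TTheory GRing.Theory Num.Theory.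
Local Open Scope ring_scope.
Set Implicit Arguments. Unset Strict Implicit. Unset Printing Implicit Defensive.
Section Basics.
Variable R : realType.
Local Notation C := (R[i]).

Lemma ctmxK m n (M : 'M[C]_(m, n)) : ctmx (ctmx M) = M.
Proof. by apply/matrixP=> i j; rewrite !mxE conjCK. Qed.

Lemma ctmx_mul m n p (M : 'M[C]_(m, n)) (N : 'M[C]_(n, p)) :
  ctmx (M *m N) = ctmx N *m ctmx M.
Proof. by rewrite /ctmx map_mxM trmx_mul. Qed.

Lemma ctmxD m n (M N : 'M[C]_(m, n)) : ctmx (M + N) = ctmx M + ctmx N.
Proof. by apply/matrixP=> i j; rewrite !mxE rmorphD. Qed.

Lemma ctmxN m n (M : 'M[C]_(m, n)) : ctmx (- M) = - ctmx M.
Proof. by apply/matrixP=> i j; rewrite !mxE rmorphN. Qed.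

Lemma ctmxB m n (M N : 'M[C]_(m, n)) : ctmx (M - N) = ctmx M - ctmx N.
Proof. by rewrite ctmxD ctmxN. Qed.

Lemma ctmx1 n : ctmx (1%:M : 'M[C]_n) = 1%:M.
Proof. by apply/matrixP=> i j; rewrite !mxE eq_sym; case: (i == j); rewrite /= ?rmorph1 ?rmorph0. Qed.

Lemma ctmx_unit n (M : 'M[C]_n) : M \in unitmx -> ctmx M \in unitmx.
Proof.
move=> Mu; have := mulVmx Mu => /(congr1 (fun X : 'M[C]_n => ctmx X)).
by rewrite ctmx_mul ctmx1 => /mulmx1_unit [].
Qed.

Lemma ctmx_inv n (M : 'M[C]_n) : M \in unitmx -> ctmx (invmx M) = invmx (ctmx M).
Proof.
move=> Mu; have Mcu := ctmx_unit Mu.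
have := mulmxV Mu => /(congr1 (fun X : 'M[C]_n => ctmx X)); rewrite ctmx_mul ctmx1 => h.
by rewrite -[LHS]mulmx1 -(mulmxV Mcu) mulmxA h mul1mx.
Qed.

Lemma ctmx_col m1 m2 (x : 'M[C]_(m1, 1)) (y : 'M[C]_(m2, 1)) :
  ctmx (col_mx x y) = row_mx (ctmx x) (ctmx y).
Proof. by rewrite /ctmx map_col_mx tr_col_mx. Qed.

Definition dot n (a b : 'cV[C]_n) : C := (ctmx a *m b) 0 0.
Definition rd n (a b : 'cV[C]_n) : R := complex.Re (dot a b).

Lemma dotE n (a b : 'cV[C]_n) : dot a b = \sum_i (a i 0)^* * b i 0.
Proof. by rewrite /dot mxE; apply: eq_bigr => i _; rewrite !mxE. Qed.

Lemma dotDr n (a b c : 'cV[C]_n) : dot a (b + c) = dot a b + dot a c.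
Proof. by rewrite /dot mulmxDr mxE. Qed.
Lemma dotDl n (a b c : 'cV[C]_n) : dot (a + b) c = dot a c + dot b c.
Proof. by rewrite /dot ctmxD mulmxDl mxE. Qed.
Lemma dotNr n (a b : 'cV[C]_n) : dot a (- b) = - dot a b.
Proof. by rewrite /dot mulmxN mxE. Qed.
Lemma dotNl n (a b : 'cV[C]_n) : dot (- a) b = - dot a b.
Proof. by rewrite /dot ctmxN mulNmx mxE. Qed.
Lemma dotZr n k (a b : 'cV[C]_n) : dot a (k *: b) = k * dot a b.
Proof. by rewrite /dot -scalemxAr mxE. Qed.
Lemma dotZl n k (a b : 'cV[C]_n) : dot (k *: a) b = k^* * dot a b.
Proof.
rewrite !dotE mulr_sumr; apply: eq_bigr => i _.
by rewrite mxE rmorphM mulrA.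
Qed.
Lemma dot_mull n (M : 'M[C]_n) (a b : 'cV[C]_n) : dot (M *m a) b = dot a (ctmx M *m b).
Proof. by rewrite /dot ctmx_mul mulmxA. Qed.
Lemma dotC n (a b : 'cV[C]_n) : dot b a = (dot a b)^*.
Proof.
rewrite !dotE rmorph_sum; apply: eq_bigr => i _.
by rewrite rmorphM /= conjCK mulrC.
Qed.
Lemma dot0r n (a : 'cV[C]_n) : dot a 0 = 0.
Proof. by rewrite /dot mulmx0 mxE. Qed.
Lemma dot_col m1 m2 (x u : 'cV[C]_m1) (y v : 'cV[C]_m2) :
  dot (col_mx x y) (col_mx u v) = dot x u + dot y v.
Proof. by rewrite /dot ctmx_col mul_row_col mxE. Qed.

Lemma dot_ge0 n (a : 'cV[C]_n) : 0 <= dot a a.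
Proof. by rewrite dotE sumr_ge0 // => i _; rewrite mulrC mul_conjC_ge0. Qed.

Lemma dot_eq0 n (a : 'cV[C]_n) : dot a a = 0 -> a = 0.
Proof.
rewrite dotE => /eqP; rewrite psumr_eq0 => [/allP h|i _]; last first.
  by rewrite mulrC mul_conjC_ge0.
apply/matrixP=> i j; rewrite ord1 mxE.
by have := h i (mem_index_enum _); rewrite mulrC mul_conjC_eq0 => /eqP.
Qed.

Lemma ReJ (z : C) : complex.Re (z^*) = complex.Re z.
Proof. by apply: complexI; rewrite !complexRe Re_conj. Qed.

Lemma ReD (z w : C) : complex.Re (z + w) = complex.Re z + complex.Re w.
Proof. by case: z; case: w. Qed.
Lemma ReN (z : C) : complex.Re (- z) = - complex.Re z.
Proof. by case: z. Qed.
Lemma ReRM (t : R) (z : C) : complex.Re ((t%:C)%C * z) = t * complex.Re z.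
Proof. by case: z => a b /=; rewrite mul0r subr0. Qed.
Lemma conjR (t : R) : ((t%:C)%C : C)^* = (t%:C)%C.
Proof. by apply: conj_Creal; rewrite complex_real. Qed.
Lemma Re_ge0 (z : C) : 0 <= z -> 0 <= complex.Re z.
Proof. by rewrite lecE => /andP[_]. Qed.
Lemma Re_le (z w : C) : z <= w -> complex.Re z <= complex.Re w.
Proof. by rewrite lecE => /andP[_]. Qed.
Lemma ge0_Re_eq0 (z : C) : 0 <= z -> complex.Re z = 0 -> z = 0.
Proof.
move=> /ger0_Im; case: z => a b /= -> ->. by [].
Qed.

Lemma rdC n (a b : 'cV[C]_n) : rd a b = rd b a.
Proof. by rewrite /rd dotC ReJ. Qed.
Lemma rdDr n (a b c : 'cV[C]_n) : rd a (b + c) = rd a b + rd a c.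
Proof. by rewrite /rd dotDr ReD. Qed.
Lemma rdDl n (a b c : 'cV[C]_n) : rd (a + b) c = rd a c + rd b c.
Proof. by rewrite /rd dotDl ReD. Qed.
Lemma rdNr n (a b : 'cV[C]_n) : rd a (- b) = - rd a b.
Proof. by rewrite /rd dotNr ReN. Qed.
Lemma rdNl n (a b : 'cV[C]_n) : rd (- a) b = - rd a b.
Proof. by rewrite /rd dotNl ReN. Qed.
Lemma rdZr n (t : R) (a b : 'cV[C]_n) : rd a ((t%:C)%C *: b) = t * rd a b.
Proof. by rewrite /rd dotZr ReRM. Qed.
Lemma rdZl n (t : R) (a b : 'cV[C]_n) : rd ((t%:C)%C *: a) b = t * rd a b.
Proof. by rewrite /rd dotZl conjR ReRM. Qed.
Lemma rd_mull n (M : 'M[C]_n) (a b : 'cV[C]_n) : rd (M *m a) b = rd a (ctmx M *m b).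
Proof. by rewrite /rd dot_mull. Qed.
Lemma rd_mulr n (M : 'M[C]_n) (a b : 'cV[C]_n) : rd a (M *m b) = rd (ctmx M *m a) b.
Proof. by rewrite rd_mull ctmxK. Qed.
Lemma rd0r n (a : 'cV[C]_n) : rd a 0 = 0.
Proof. by rewrite /rd dot0r. Qed.
Lemma rd0l n (a : 'cV[C]_n) : rd 0 a = 0.
Proof. by rewrite rdC rd0r. Qed.
Lemma rd_ge0 n (a : 'cV[C]_n) : 0 <= rd a a.
Proof. exact/Re_ge0/dot_ge0. Qed.
Lemma rd_eq0 n (a : 'cV[C]_n) : rd a a = 0 -> a = 0.
Proof. by move=> h; apply: dot_eq0; apply: ge0_Re_eq0 h; apply: dot_ge0. Qed.
Lemma rd_gt0 n (a : 'cV[C]_n) : a != 0 -> 0 < rd a a.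
Proof.
move=> an0; rewrite lt_def rd_ge0 andbT; apply/eqP => /rd_eq0 h.
by rewrite h eqxx in an0.
Qed.
Lemma rd_col m1 m2 (x u : 'cV[C]_m1) (y v : 'cV[C]_m2) :
  rd (col_mx x y) (col_mx u v) = rd x u + rd y v.
Proof. by rewrite /rd dot_col ReD. Qed.

End Basics.

Section CS.
Variable R : realType.
Local Notation C := (R[i]).

Lemma discr (a b c : R) : 0 <= a -> (forall t : R, 0 <= c + 2 * b * t + a * t ^+ 2) ->
  b ^+ 2 <= a * c.
Proof.
move=> a0 h; have [a_gt0|] := ltP 0 a.
  have := h (- b / a).
  have -> : c + 2 * b * (- b / a) + a * (- b / a) ^+ 2 = c - b ^+ 2 / a.
    by field; rewrite gt_eqF.
  rewrite subr_ge0 ler_pdivrMr // => hb; by rewrite mulrC.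
move=> ale0; have a00 : a = 0 by apply/eqP; rewrite eq_le ale0 a0.
rewrite a00 mul0r; have [->|bn0] := eqVneq b 0; first by rewrite expr0n.
have := h (- (c + 1) / (2 * b)).
have -> : c + 2 * b * (- (c + 1) / (2 * b)) + a * (- (c + 1) / (2 * b)) ^+ 2 = -1.
  by rewrite a00 mul0r addr0; field.
by rewrite oppr_ge0 ler10.
Qed.

Definition psdR n (P : 'M[C]_n) :=
  ctmx P = P /\ forall v, 0 <= rd v (P *m v).

Lemma hpsd_psdR n (P : 'M[C]_n) : hpsd P -> psdR P.
Proof.
move=> [h1 h2]; split => // v; rewrite /rd /dot mulmxA.
exact: Re_ge0.
Qed.

Lemma psd_sym n (P : 'M[C]_n) a b : ctmx P = P -> rd a (P *m b) = rd b (P *m a).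
Proof. by move=> hP; rewrite rd_mulr hP rdC. Qed.

Lemma CS n (P : 'M[C]_n) a b : psdR P ->
  rd a (P *m b) ^+ 2 <= rd a (P *m a) * rd b (P *m b).
Proof.
move=> [hP hpos]; rewrite mulrC; apply: discr; first exact: hpos.
move=> t; have := hpos (a + (t%:C)%C *: b).
rewrite mulmxDr !rdDl !rdDr -!scalemxAr !rdZr !rdZl.
rewrite (psd_sym b a hP).
move=> h; set x := rd a (P *m a) in h *; set y := rd a (P *m b) in h *.
set z := rd b (P *m b) in h *. nra.
Qed.

Lemma sqrt_le_of_sq (x y : R) : 0 <= y -> x ^+ 2 <= y -> x <= Num.sqrt y.
Proof.
move=> y0 h; apply: le_trans (ler_norm x) _.
by rewrite -sqrtr_sqr; apply: ler_wsqrtr.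
Qed.

Lemma CS_sqrt n (P : 'M[C]_n) a b : psdR P ->
  rd a (P *m b) <= Num.sqrt (rd a (P *m a)) * Num.sqrt (rd b (P *m b)).
Proof.
move=> hP; have [_ hpos] := hP.
rewrite -sqrtrM ?hpos //; apply: sqrt_le_of_sq; last exact: CS.
by rewrite mulr_ge0 ?hpos.
Qed.

Lemma psd1 n : psdR (1%:M : 'M[C]_n).
Proof. by split; [exact: ctmx1 | move=> v; rewrite mul1mx rd_ge0]. Qed.

Lemma CS1 n (a b : 'cV[C]_n) : rd a b <= Num.sqrt (rd a a) * Num.sqrt (rd b b).
Proof. by have := CS_sqrt a b (psd1 n); rewrite !mul1mx. Qed.

Lemma psd_triangle n (P : 'M[C]_n) a b : psdR P ->
  Num.sqrt (rd (a + b) (P *m (a + b))) <=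
  Num.sqrt (rd a (P *m a)) + Num.sqrt (rd b (P *m b)).
Proof.
move=> hP; have [hs hpos] := hP.
rewrite -[X in _ <= X]ger0_norm ?addr_ge0 ?sqrtr_ge0 // -sqrtr_sqr; apply: ler_wsqrtr.
rewrite sqrrD !sqr_sqrtr ?hpos // mulmxDr !rdDl !rdDr (psd_sym b a hs).
have := CS_sqrt a b hP; set s := Num.sqrt _ * Num.sqrt _ => h.
lra.
Qed.

Lemma psd_zero n (P : 'M[C]_n) v : psdR P -> rd v (P *m v) = 0 -> P *m v = 0.
Proof.
move=> hP h0; apply: rd_eq0; have := CS (P *m v) v hP.
rewrite h0 mulr0 => h; apply/eqP; rewrite -sqrf_eq0 eq_le h /=.
by rewrite sqr_ge0.
Qed.

Lemma mx_eq0_vec m n (M : 'M[C]_(m, n)) : (forall v : 'cV[C]_n, M *m v = 0) -> M = 0.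
Proof.
move=> h; apply/matrixP=> i j; have := h (delta_mx j 0 : 'cV[C]_n).
move/matrixP/(_ i 0); rewrite !mxE => <-.
rewrite (bigD1 j) //= big1 ?addr0; last first.
  by move=> k kj; rewrite !mxE (negbTE kj) mulr0.
by rewrite !mxE !eqxx mulr1.
Qed.

End CS.

Section Uniq.
Variable R : realType.
Local Notation C := (R[i]).

Lemma mx_eq0_delta n (M : 'M[C]_n) :
  (forall i : 'I_n, M *m (delta_mx i 0 : 'cV[C]_n) = 0) -> M = 0.
Proof.
move=> h; apply/matrixP=> i j; have := h j.
move/matrixP/(_ i 0); rewrite !mxE => <-.
rewrite (bigD1 j) //= big1 ?addr0; last first.
  by move=> k kj; rewrite !mxE (negbTE kj) mulr0.
by rewrite !mxE !eqxx mulr1.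
Qed.

Lemma rd_delta n (M : 'M[C]_n) i :
  rd (delta_mx i 0 : 'cV[C]_n) (M *m delta_mx i 0) = complex.Re (M i i).
Proof.
rewrite /rd dotE (bigD1 i) //= big1 ?addr0; last first.
  by move=> k ki; rewrite !mxE (negbTE ki) /= rmorph0 mul0r.
rewrite !mxE !eqxx /= rmorph1 mul1r.
rewrite (bigD1 i) //= big1 ?addr0; last first.
  by move=> k ki; rewrite !mxE (negbTE ki) mulr0.
by rewrite !mxE !eqxx mulr1.
Qed.

Lemma Re_tr n (M : 'M[C]_n) :
  complex.Re (\tr M) = \sum_i rd (delta_mx i 0 : 'cV[C]_n) (M *m delta_mx i 0).
Proof.
rewrite /mxtrace (big_morph (fun z : C => complex.Re z) (@ReD R) (erefl _)).
by apply: eq_bigr => i _; rewrite rd_delta.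
Qed.

Lemma DXD_pos n (D X : 'M[C]_n) : ctmx D = D -> psdR X -> forall i : 'I_n,
    0 <= rd (delta_mx i 0 : 'cV[C]_n) (D *m X *m D *m delta_mx i 0).
Proof.
move=> hD [_ pX] i; rewrite -!mulmxA rd_mulr hD; exact: pX.
Qed.

Lemma DXD_tr_ge0 n (D X : 'M[C]_n) : ctmx D = D -> psdR X ->
  0 <= complex.Re (\tr (D *m X *m D)).
Proof. by move=> hD hX; rewrite Re_tr sumr_ge0 // => i _; exact: DXD_pos. Qed.

Lemma DXD_zero n (D X : 'M[C]_n) : ctmx D = D -> psdR X ->
  complex.Re (\tr (D *m X *m D)) = 0 -> D *m X *m D = 0.
Proof.
move=> hD hX; rewrite Re_tr => /eqP; rewrite psumr_eq0; last first.
  by move=> i _; exact: DXD_pos.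
move=> /allP hall; apply: mx_eq0_delta => i.
have := hall i (mem_index_enum _) => /eqP.
rewrite -!mulmxA rd_mulr hD => /(psd_zero hX) h.
by rewrite h mulmx0.
Qed.

Lemma sqrt_uniq n (S T : 'M[C]_n) : psdR S -> psdR T -> S *m S = T *m T -> S = T.
Proof.
move=> hS hT eST; have [sS pS] := hS; have [sT pT] := hT.
have [D eD] : {D | D = S - T} by exists (S - T).
have hD : ctmx D = D by rewrite eD ctmxB sS sT.
have h1 : D *m D *m S + D *m T *m D = 0.
  rewrite -!mulmxA -mulmxDr.
  suff -> : D *m S + T *m D = 0 by rewrite mulmx0.
  by rewrite eD mulmxBl mulmxBr eST addrA subrK subrr.
have h2 : \tr (D *m S *m D) + \tr (D *m T *m D) = 0.
  have e : \tr (D *m S *m D) = \tr (D *m D *m S).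
    by rewrite -mulmxA (mxtrace_mulC D) -[S *m D *m D]mulmxA mxtrace_mulC.
  by rewrite e -mxtraceD h1 mxtrace0.
have hRe := congr1 (fun z : C => complex.Re z) h2; rewrite /= ReD in hRe.
have p1 := DXD_tr_ge0 hD hS.
have p2 := DXD_tr_ge0 hD hT.
have eS : D *m S *m D = 0 by apply: DXD_zero => //; lra.
have eT : D *m T *m D = 0 by apply: DXD_zero => //; lra.
have D3 : D *m D *m D = 0.
  have -> : D *m D *m D = D *m S *m D - D *m T *m D.
    by rewrite -mulmxBl -mulmxBr eD.
  by rewrite eS eT subrr.
have D2 : forall v : 'cV[C]_n, D *m (D *m v) = 0.
  move=> v; apply: rd_eq0; rewrite rd_mull hD rd_mull hD !mulmxA.
  by rewrite D3 !mul0mx rd0r.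
have D0 : D = 0.
  apply: mx_eq0_vec => v.
  by apply: rd_eq0; rewrite rd_mull hD D2 rd0r.
by apply/eqP; rewrite -subr_eq0 -eD D0.
Qed.

End Uniq.

Section Exist.
Variable R : realType.
Local Notation C := (R[i]).

Lemma ctmxE m n (M : 'M[C]_(m, n)) : ctmx M = (M ^t Num.Def.conjC)%sesqui.
Proof. by rewrite /ctmx map_trmx. Qed.

Lemma ctmx_diag n (e : 'rV[C]_n) : (forall i, 0 <= e 0 i) -> ctmx (diag_mx e) = diag_mx e.
Proof.
move=> he; apply/matrixP=> i j; rewrite !mxE eq_sym.
have [->|ij] := eqVneq i j; last by rewrite !mulr0n rmorph0.
by rewrite !mulr1n conj_Creal // ger0_real // he.
Qed.

Lemma form_diag_ge0 n (e : 'rV[C]_n) (w : 'cV[C]_n) : (forall i, 0 <= e 0 i) ->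
  0 <= (ctmx w *m diag_mx e *m w) 0 0.
Proof.
move=> he; rewrite mul_mx_diag mxE sumr_ge0 // => j _; rewrite !mxE.
by rewrite mulrC mulrA mulr_ge0 // mul_conjC_ge0.
Qed.

Lemma sqrt_exists n (M : 'M[C]_n) : exists S : 'M[C]_n, hpsd S /\ S *m S = M *m ctmx M.
Proof.
have [X eX] : {X | X = M *m ctmx M} by exists (M *m ctmx M).
have hX : ctmx X = X by rewrite eX ctmx_mul ctmxK.
have nX : X \is normalmx by apply/normalmxP; rewrite -ctmxE hX.
have := orthomx_spectralP nX.
set P := spectralmx X; set d := spectral_diag X => eXd.
have uP : P \is unitarymx := spectral_unitarymx X.
have iP : invmx P = ctmx P by rewrite invmx_unitary // ctmxE.
have PP : P *m ctmx P = 1%:M by rewrite ctmxE; apply/unitarymxP.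
have PP' : ctmx P *m P = 1%:M by rewrite -iP mulVmx // unitarymx_unit.
rewrite iP in eXd.
have hd : forall i, 0 <= d 0 i.
  move=> i.
  have -> : d 0 i = (P *m X *m ctmx P) i i.
    rewrite eXd !mulmxA PP mul1mx -mulmxA PP mulmx1 !mxE eqxx mulr1n //.
  rewrite eX !mulmxA -(mulmxA (P *m M)) -ctmx_mul.
  set N := P *m M; rewrite mxE sumr_ge0 // => k _; rewrite !mxE.
  exact: mul_conjC_ge0.
pose e := \row_i sqrtC (d 0 i).
have he : forall i, 0 <= e 0 i by move=> i; rewrite mxE sqrtC_ge0.
exists (ctmx P *m diag_mx e *m P); split; first split.
- by rewrite !ctmx_mul ctmxK ctmx_diag // mulmxA.
- move=> v; rewrite !mulmxA -ctmx_mul -(mulmxA _ P v).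
  exact: form_diag_ge0.
- rewrite -eX eXd -!mulmxA (mulmxA P) PP mul1mx (mulmxA (diag_mx e)) mulmx_diag.
  congr (_ *m (diag_mx _ *m _)); apply/rowP => j; rewrite !mxE.
  by rewrite -expr2 sqrtCK.
Qed.

End Exist.

Section Bounds.
Local Open Scope classical_set_scope.
Variable R : realType.
Local Notation C := (R[i]).

Lemma ge0_Cre (z : C) : 0 <= z -> z = ((complex.Re z)%:C)%C.
Proof. by move=> /ger0_Im; case: z => a b /= ->. Qed.

Lemma mx_bound_C m n (M : 'M[C]_(m, n)) (x : 'cV[C]_n) :
  dot (M *m x) (M *m x) <= (\sum_i (\sum_j `|M i j|) ^+ 2) * dot x x.
Proof.
have N0 : 0 <= dot x x := dot_ge0 x.
have hx j : `|x j 0| <= sqrtC (dot x x).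
  rewrite -[`|x j 0|]sqrCK ?normr_ge0 // ler_sqrtC ?nnegrE ?exprn_ge0 ?normr_ge0 //.
  rewrite normCK dotE (bigD1 j) //= mulrC lerDl sumr_ge0 // => k _.
  by rewrite mulrC mul_conjC_ge0.
have hi i : `|(M *m x) i 0| <= (\sum_j `|M i j|) * sqrtC (dot x x).
  rewrite mxE; apply: le_trans (ler_norm_sum _ _ _) _; rewrite mulr_suml.
  by apply: ler_sum => j _; rewrite normrM ler_wpM2l ?normr_ge0 ?hx.
rewrite [X in X <= _]dotE mulr_suml; apply: ler_sum => i _.
rewrite mulrC -normCK.
have -> : (\sum_j `|M i j|) ^+ 2 * dot x x = ((\sum_j `|M i j|) * sqrtC (dot x x)) ^+ 2.
  by rewrite exprMn sqrtCK.
by rewrite !expr2 ler_pM ?normr_ge0.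
Qed.

Lemma mx_bound m n (M : 'M[C]_(m, n)) : exists K : R, 0 <= K /\
  forall x : 'cV[C]_n, rd (M *m x) (M *m x) <= K * rd x x.
Proof.
set Kc := \sum_i (\sum_j `|M i j|) ^+ 2.
have K0 : 0 <= Kc by rewrite sumr_ge0 // => i _; rewrite exprn_ge0 // sumr_ge0.
exists (complex.Re Kc); split; first exact: Re_ge0.
move=> x; have := Re_le (mx_bound_C M x); rewrite -/Kc.
by rewrite {1}(ge0_Cre K0) ReRM.
Qed.

Lemma sup_le_K (E : set R) K : 0 <= K -> (forall r, E r -> r <= K) -> sup E <= K.
Proof.
move=> K0 h; have [ne|e] := pselect (E !=set0); first by apply: ge_sup.
have -> : E = set0.
  by apply/seteqP; split => // r Er; apply: e; exists r.
by rewrite sup0.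
Qed.

Lemma le_sup_K (E : set R) K r : (forall r, E r -> r <= K) -> E r -> r <= sup E.
Proof. by move=> h Er; apply: ub_le_sup => //; exists K. Qed.

Lemma sup_ge0 (E : set R) K : (forall r, E r -> 0 <= r) -> (forall r, E r -> r <= K) ->
  0 <= sup E.
Proof.
move=> h0 hK; have [[r Er]|e] := pselect (E !=set0).
  by apply: le_trans (h0 r Er) (le_sup_K hK Er).
have -> : E = set0.
  by apply/seteqP; split => // r Er; apply: e; exists r.
by rewrite sup0.
Qed.

Lemma vnormE n (x : 'cV[C]_n) : vnorm x = Num.sqrt (rd x x).
Proof. by []. Qed.

Lemma vnorm_gt0 n (x : 'cV[C]_n) : x != 0 -> 0 < vnorm x.
Proof. by move=> /rd_gt0 h; rewrite vnormE sqrtr_gt0. Qed.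

Lemma vnorm_bound m n (M : 'M[C]_(m, n)) : exists K : R, 0 <= K /\
  forall x : 'cV[C]_n, vnorm (M *m x) <= K * vnorm x.
Proof.
have [K [K0 hK]] := mx_bound M; exists (Num.sqrt K); split; first exact: sqrtr_ge0.
by move=> x; rewrite !vnormE -sqrtrM //; apply: ler_wsqrtr.
Qed.

Lemma specnorm_ub n (M : 'M[C]_n) (x : 'cV[C]_n) :
  vnorm (M *m x) <= specnorm M * vnorm x.
Proof.
have [->|xn0] := eqVneq x 0.
  by rewrite mulmx0 vnormE rd0r sqrtr0 mulr0.
have [K [K0 hK]] := vnorm_bound M.
have xp := vnorm_gt0 xn0.
rewrite -ler_pdivrMr //; apply: (@le_sup_K _ K).
  move=> r [y [yn0 ->]]; rewrite ler_pdivrMr ?vnorm_gt0 //.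
by exists x.
Qed.

Lemma specnorm_ge0 n (M : 'M[C]_n) : 0 <= specnorm M.
Proof.
have [K [K0 hK]] := vnorm_bound M.
apply: (@sup_ge0 _ K).
  by move=> r [y [yn0 ->]]; rewrite divr_ge0 // sqrtr_ge0.
by move=> r [y [yn0 ->]]; rewrite ler_pdivrMr ?vnorm_gt0.
Qed.

Lemma specnorm_le n (M : 'M[C]_n) K : 0 <= K ->
  (forall x, vnorm (M *m x) <= K * vnorm x) -> specnorm M <= K.
Proof.
move=> K0 h; apply: sup_le_K => // r [y [yn0 ->]].
by rewrite ler_pdivrMr ?vnorm_gt0.
Qed.

Lemma qformE n (M : 'M[C]_n) x : qform M x = rd x (M *m x).
Proof. by rewrite /qform /rd /dot mulmxA. Qed.

Lemma rayleigh_ub n (M S : 'M[C]_n) :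
  (forall x, x != 0 -> 0 < qform S x) ->
  (exists K, forall x, x != 0 -> qform M x <= K * qform S x) ->
  forall x, qform M x <= rayleigh_sup M S * qform S x.
Proof.
move=> hS [K hK] x; have [->|xn0] := eqVneq x 0.
  by rewrite !qformE !mulmx0 !rd0r mulr0.
rewrite -ler_pdivrMr ?hS //; apply: (@le_sup_K _ K); last by exists x.
by move=> r [y [yn0 ->]]; rewrite ler_pdivrMr ?hS ?hK.
Qed.

Lemma rayleigh_ge0 n (M S : 'M[C]_n) :
  (forall x, x != 0 -> 0 < qform S x) -> (forall x, 0 <= qform M x) ->
  (exists K, forall x, x != 0 -> qform M x <= K * qform S x) ->
  0 <= rayleigh_sup M S.
Proof.
move=> hS hM [K hK]; apply: (@sup_ge0 _ K).
  by move=> r [y [yn0 ->]]; rewrite divr_ge0 // ltW ?hS.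
by move=> r [y [yn0 ->]]; rewrite ler_pdivrMr ?hS ?hK.
Qed.

End Bounds.

Section Real.
Variable R : realType.

Lemma sq_le_sq (a b : R) : 0 <= b -> a ^+ 2 <= b ^+ 2 -> a <= b.
Proof. move=> b0 h; nra. Qed.

Lemma real_core (p q X Y s t ra rg M : R) :
  0 <= p -> 0 <= q -> 0 <= X -> 0 <= Y -> 0 <= s -> 0 <= t -> 0 <= ra -> 0 <= rg ->
  ra <= M -> rg <= M ->
  s <= q + rg * Y -> t <= p + ra * X -> X ^+ 2 + Y ^+ 2 <= Y * (rg * p) + X * (ra * q) ->
  s ^+ 2 + t ^+ 2 <= (1 + M ^+ 2) ^+ 2 * (p ^+ 2 + q ^+ 2).
Proof.
move=> p0 q0 X0 Y0 s0 t0 ra0 rg0 raM rgM hs ht hZ.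
have M0 : 0 <= M by apply: le_trans raM.
set N := p ^+ 2 + q ^+ 2; set Z := X ^+ 2 + Y ^+ 2.
have N0 : 0 <= N by rewrite /N; nra.
have Z0 : 0 <= Z by rewrite /Z; nra.
have c1 : (Y * p + X * q) ^+ 2 <= Z * N.
  have := sqr_ge0 (X * p - Y * q); rewrite /Z /N; nra.
have c2 : Y * (rg * p) + X * (ra * q) <= M * (Y * p + X * q).
  have h1 : 0 <= (M - rg) * (Y * p) by rewrite mulr_ge0 ?subr_ge0 ?mulr_ge0.
  have h2 : 0 <= (M - ra) * (X * q) by rewrite mulr_ge0 ?subr_ge0 ?mulr_ge0.
  nra.
have W0 : 0 <= Y * p + X * q by nra.
have c3 : Z <= M ^+ 2 * N.
  have hZW : Z <= M * (Y * p + X * q) by rewrite /Z; lra.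
  have h' : Z ^+ 2 <= (M * (Y * p + X * q)) ^+ 2 by rewrite !expr2 ler_pM.
  have h'' : (M * (Y * p + X * q)) ^+ 2 <= M ^+ 2 * (Z * N).
    by rewrite exprMn ler_wpM2l ?exprn_ge0.
  have h : Z * Z <= (M ^+ 2 * N) * Z.
    rewrite -expr2; apply: (le_trans h'); apply: (le_trans h'').
    by rewrite le_eqVlt; apply/orP; left; apply/eqP; ring.
  have [->|Zp] := eqVneq Z 0; first by rewrite mulr_ge0 ?exprn_ge0.
  by rewrite -(ler_pM2r (x := Z)) // lt_def Zp Z0.
have c4' : (q * Y + p * X) ^+ 2 <= (M * N) ^+ 2.
  have : (q * Y + p * X) ^+ 2 <= N * Z.
    have := sqr_ge0 (p * Y - q * X); rewrite /Z /N; nra.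
  move=> h; apply: le_trans h _; rewrite exprMn; nra.
have c4 : q * Y + p * X <= M * N by apply: sq_le_sq; nra.
have c5 : q * (rg * Y) + p * (ra * X) <= M ^+ 2 * N.
  have : q * (rg * Y) + p * (ra * X) <= M * (q * Y + p * X).
    have h1 : 0 <= (M - rg) * (q * Y) by rewrite mulr_ge0 ?subr_ge0 ?mulr_ge0.
    have h2 : 0 <= (M - ra) * (p * X) by rewrite mulr_ge0 ?subr_ge0 ?mulr_ge0.
    nra.
  nra.
have c6 : (rg * Y) ^+ 2 + (ra * X) ^+ 2 <= M ^+ 2 * (M ^+ 2 * N).
  have a1 : rg ^+ 2 <= M ^+ 2 by rewrite !expr2 ler_pM.
  have a2 : ra ^+ 2 <= M ^+ 2 by rewrite !expr2 ler_pM.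
  have b1 : (rg * Y) ^+ 2 <= M ^+ 2 * Y ^+ 2 by rewrite exprMn ler_wpM2r ?exprn_ge0.
  have b2 : (ra * X) ^+ 2 <= M ^+ 2 * X ^+ 2 by rewrite exprMn ler_wpM2r ?exprn_ge0.
  have : (rg * Y) ^+ 2 + (ra * X) ^+ 2 <= M ^+ 2 * Z by rewrite /Z; lra.
  nra.
have e1 : s ^+ 2 <= (q + rg * Y) ^+ 2 by nra.
have e2 : t ^+ 2 <= (p + ra * X) ^+ 2 by nra.
have : (q + rg * Y) ^+ 2 + (p + ra * X) ^+ 2 =
  N + 2 * (q * (rg * Y) + p * (ra * X)) + ((rg * Y) ^+ 2 + (ra * X) ^+ 2).
  by rewrite /N; ring.
move=> e3.
have : (1 + M ^+ 2) ^+ 2 * N = N + 2 * (M ^+ 2 * N) + M ^+ 2 * (M ^+ 2 * N) by ring.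
lra.
Qed.

End Real.
Section Real2.
Variable R : realType.

Lemma final_real (rx ry ru rv Xs Ys P2 Q2 X2 Y2 al ga be : R) :
  0 <= Xs -> 0 <= Ys -> 0 <= P2 -> 0 <= Q2 -> 0 <= X2 -> 0 <= Y2 ->
  0 <= al -> 0 <= ga -> 0 <= be -> 0 <= ru -> 0 <= rv ->
  Num.sqrt Xs <= Num.sqrt Q2 + Num.sqrt (ga * Y2) ->
  Num.sqrt Ys <= Num.sqrt P2 + Num.sqrt (al * X2) ->
  X2 + Y2 <= Num.sqrt Y2 * Num.sqrt (ga * P2) + Num.sqrt X2 * Num.sqrt (al * Q2) ->
  rx <= be * Xs -> ry <= be * Ys -> P2 <= be * ru -> Q2 <= be * rv ->
  rx + ry <= (be * (1 + Num.max al ga)) ^+ 2 * (ru + rv).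
Proof.
move=> Xs0 Ys0 P0 Q0 X0 Y0 al0 ga0 be0 ru0 rv0 h1 h2 h3 f1 f2 f3 f4.
have m0 : 0 <= Num.max al ga by rewrite le_max al0.
have core := @real_core R (Num.sqrt P2) (Num.sqrt Q2) (Num.sqrt X2) (Num.sqrt Y2)
  (Num.sqrt Xs) (Num.sqrt Ys) (Num.sqrt al) (Num.sqrt ga) (Num.sqrt (Num.max al ga)).
rewrite !sqr_sqrtr // in core.
have hXs : Xs + Ys <= (1 + Num.max al ga) ^+ 2 * (P2 + Q2).
  apply: core; rewrite ?sqrtr_ge0 //.
  - by apply: ler_wsqrtr; rewrite le_max lexx.
  - by apply: ler_wsqrtr; rewrite le_max lexx orbT.
  - by rewrite -sqrtrM.
  - by rewrite -sqrtrM.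
  - by rewrite !sqrtrM // in h3.
have F1 : rx + ry <= be * (Xs + Ys) by lra.
have F2 : be * (Xs + Ys) <= be * ((1 + Num.max al ga) ^+ 2 * (P2 + Q2)).
  by rewrite ler_wpM2l.
have F3 : (1 + Num.max al ga) ^+ 2 * (P2 + Q2) <= (1 + Num.max al ga) ^+ 2 * (be * (ru + rv)).
  by rewrite ler_wpM2l ?exprn_ge0 //; lra.
have F4 : be * ((1 + Num.max al ga) ^+ 2 * (be * (ru + rv))) =
  (be * (1 + Num.max al ga)) ^+ 2 * (ru + rv) by ring.
have F5 := ler_wpM2l be0 F3.
lra.
Qed.

End Real2.

Section Core.
Variable R : realType.
Local Notation C := (R[i]).

Lemma psd_inv n (S : 'M[C]_n) : psdR S -> S \in unitmx -> psdR (invmx S).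
Proof.
move=> [sS pS] Su; split; first by rewrite ctmx_inv // sS.
move=> v; rewrite -{1}(mulKVmx Su v) rd_mull sS; exact: pS.
Qed.

Lemma inv_right n (S X : 'M[C]_n) : S \in unitmx -> S *m X = 1%:M -> X = invmx S.
Proof. by move=> Su h; rewrite -(mulKmx Su X) h mulmx1. Qed.

Lemma S_facts n (S : 'M[C]_n) (be : R) : psdR S -> S \in unitmx -> 0 <= be ->
  (forall x, rd (invmx S *m x) (invmx S *m x) <= be ^+ 2 * rd x x) ->
  (forall x, rd x (invmx S *m x) <= be * rd x x) /\
  (forall x, rd x x <= be * rd x (S *m x)).
Proof.
move=> hS Su be0 hb.
have ha : forall x, rd x (invmx S *m x) <= be * rd x x.
  move=> x.
  have hk : Num.sqrt (rd (invmx S *m x) (invmx S *m x)) <= Num.sqrt (be ^+ 2 * rd x x).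
    exact: ler_wsqrtr.
  rewrite sqrtrM ?sqr_ge0 // sqrtr_sqr ger0_norm // in hk.
  have c := CS1 x (invmx S *m x).
  have a2 : Num.sqrt (rd x x) ^+ 2 = rd x x by rewrite sqr_sqrtr // rd_ge0.
  have a0 : 0 <= Num.sqrt (rd x x) := sqrtr_ge0 _.
  move: c hk a2 a0.
  set a := Num.sqrt (rd x x); set b := Num.sqrt _; set w := rd x _.
  move=> c hk a2 a0; rewrite -a2; nra.
split => // x.
have [sS pS] := hS.
have e : rd x x = rd x (S *m (invmx S *m x)) by rewrite mulKVmx.
have h := CS_sqrt x (invmx S *m x) hS.
rewrite -e mulKVmx // [rd (invmx S *m x) x]rdC in h.
have h2 := ha x.
set r := rd x x in e h h2 *; set t := rd x (S *m x) in h *.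
set w := rd x (invmx S *m x) in h h2 *.
have r0 : 0 <= r := rd_ge0 x.
have t0 : 0 <= t := pS x.
have w0 : 0 <= w by rewrite /w; have [_ ] := psd_inv hS Su; apply.
have h3 : r <= Num.sqrt (t * (be * r)).
  rewrite sqrtrM //; apply: (le_trans h).
  by apply: ler_pM; rewrite ?sqrtr_ge0 //; apply: ler_wsqrtr.
have h4 : r ^+ 2 <= t * (be * r).
  have br0 : 0 <= t * (be * r) by rewrite !mulr_ge0.
  by rewrite -(sqr_sqrtr br0) !expr2 ler_pM.
have [->|rn0] := eqVneq r 0; first by rewrite mulr_ge0.
have rp : 0 < r by rewrite lt_def rn0 r0.
rewrite -(ler_pM2r rp) -expr2; apply: (le_trans h4).
by rewrite le_eqVlt; apply/orP; left; apply/eqP; ring.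

Qed.

Lemma aux_real (Q X Y al : R) : 0 <= Q -> 0 <= X -> 0 <= al ->
  Q ^+ 2 <= X * Y -> Y <= al * Q -> Q <= al * X.
Proof.
move=> Q0 X0 al0 h1 h2.
have h3 : Q ^+ 2 <= X * (al * Q) by apply: (le_trans h1); rewrite ler_wpM2l.
have [->|rn0] := eqVneq Q 0; first by rewrite mulr_ge0.
have rp : 0 < Q by rewrite lt_def rn0 Q0.
rewrite -(ler_pM2r rp) -expr2; apply: (le_trans h3).
by rewrite le_eqVlt; apply/orP; left; apply/eqP; ring.
Qed.

Lemma aux2 (r gg d be : R) : 0 <= r -> 0 <= gg -> 0 <= be ->
  r <= Num.sqrt gg * d -> d <= be * Num.sqrt r -> r <= be ^+ 2 * gg.
Proof.
move=> r0 g0 be0 h1 h2.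
have h : Num.sqrt r <= be * Num.sqrt gg.
  apply: (aux_real (Y := d)); rewrite ?sqrtr_ge0 // sqr_sqrtr //.
rewrite -(sqr_sqrtr r0) -(sqr_sqrtr g0) -exprMn.
by rewrite !expr2 ler_pM ?sqrtr_ge0.
Qed.

Lemma weighted n (A S : 'M[C]_n) (al : R) : psdR A -> psdR S -> S \in unitmx -> 0 <= al ->
  (forall v, rd v (A *m v) <= al * rd v (S *m v)) ->
  forall x, rd (A *m x) (invmx S *m (A *m x)) <= al * rd x (A *m x).
Proof.
move=> hA hS Su al0 hAS x.
have [sA pA] := hA.
have [k ek] : {k | k = invmx S *m (A *m x)} by exists (invmx S *m (A *m x)).
rewrite -ek.
have hk : rd k (S *m k) = rd (A *m x) k by rewrite ek mulKVmx // rdC.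
have eQ : rd (A *m x) k = rd x (A *m k) by rewrite rd_mull sA.
have h := CS x k hA; rewrite -eQ in h.
have h2 := hAS k; rewrite hk in h2.
have Q0 : 0 <= rd (A *m x) k by rewrite ek; have [_] := psd_inv hS Su; apply.
exact: aux_real Q0 (pA x) al0 h h2.
Qed.

End Core.

Section Core2.
Variable R : realType.
Local Notation C := (R[i]).

Lemma inv_sq n (S W : 'M[C]_n) : S \in unitmx -> S *m S *m W = 1%:M ->
  invmx S *m invmx S = W.
Proof. by move=> Su h; rewrite -[LHS]mulmx1 -h !mulmxA mulmxKV // mulVmx // mul1mx. Qed.

Lemma lin_aux (xu yv X2 Y2 xBy vu T uv Ax : R) :
  xu = X2 + xBy -> yv = xBy - Y2 -> xu = vu + T -> yv = uv - Ax -> vu = uv ->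
  X2 + Y2 = T + Ax.
Proof. by move=> e1 e2 e3 e4 e5; rewrite -e5 in e4; lra. Qed.

Lemma setup n (B S1 S2 : 'M[C]_n) (be : R) :
  B \in unitmx -> psdR S1 -> psdR S2 -> S1 \in unitmx -> S2 \in unitmx ->
  S1 *m S1 = B *m ctmx B -> S2 *m S2 = ctmx B *m B -> 0 <= be ->
  (forall g, rd (invmx B *m g) (invmx B *m g) <= be ^+ 2 * rd g g) ->
  [/\ (forall x, rd x (invmx S1 *m x) <= be * rd x x),
      (forall x, rd x x <= be * rd x (S1 *m x)),
      (forall x, rd x (invmx S2 *m x) <= be * rd x x) &
      (forall x, rd x x <= be * rd x (S2 *m x))].
Proof.
move=> Bu hS1 hS2 S1u S2u e1 e2 be0 hb.
have [sS1 pS1] := hS1; have [sS2 pS2] := hS2.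
have Bsu := ctmx_unit Bu.
have [iB eiB] : {M | M = invmx B} by exists (invmx B).
have [iBs eiBs] : {M | M = invmx (ctmx B)} by exists (invmx (ctmx B)).
have ciB : ctmx iB = iBs by rewrite eiB eiBs ctmx_inv.
have ciBs : ctmx iBs = iB by rewrite -ciB ctmxK.
have BiB : B *m iB = 1%:M by rewrite eiB mulmxV.
have BsiBs : ctmx B *m iBs = 1%:M by rewrite eiBs mulmxV.
rewrite -eiB in hb.
have hb2 : forall g, rd (iBs *m g) (iBs *m g) <= be ^+ 2 * rd g g.
  move=> g.
  have c := CS1 g (iB *m (iBs *m g)).
  have e : rd (iBs *m g) (iBs *m g) = rd g (iB *m (iBs *m g)) by rewrite rd_mull ciBs.
  rewrite -e in c.
  have hk : Num.sqrt (rd (iB *m (iBs *m g)) (iB *m (iBs *m g)))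
      <= be * Num.sqrt (rd (iBs *m g) (iBs *m g)).
    have := ler_wsqrtr (hb (iBs *m g)).
    by rewrite sqrtrM ?sqr_ge0 // sqrtr_sqr ger0_norm.
  exact: aux2 (rd_ge0 _) (rd_ge0 _) be0 c hk.

have hbS1 : forall z, rd (invmx S1 *m z) (invmx S1 *m z) <= be ^+ 2 * rd z z.
  move=> z; have ei : invmx S1 *m invmx S1 = iBs *m iB.
    by apply: inv_sq => //; rewrite e1 -mulmxA (mulmxA (ctmx B)) BsiBs mul1mx BiB.
  rewrite rd_mull (ctmx_inv S1u) sS1 mulmxA ei -mulmxA rd_mulr ciBs; exact: hb.
have hbS2 : forall z, rd (invmx S2 *m z) (invmx S2 *m z) <= be ^+ 2 * rd z z.
  move=> z; have ei : invmx S2 *m invmx S2 = iB *m iBs.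
    by apply: inv_sq => //; rewrite e2 -mulmxA (mulmxA B) BiB mul1mx BsiBs.
  rewrite rd_mull (ctmx_inv S2u) sS2 mulmxA ei -mulmxA rd_mulr ciB; exact: hb2.
have [fa1 fb1] := S_facts hS1 S1u be0 hbS1.
have [fa2 fb2] := S_facts hS2 S2u be0 hbS2.
by split.
Qed.

Lemma core n (A Cm B S1 S2 : 'M[C]_n) (al ga be : R) :
  psdR A -> psdR Cm -> B \in unitmx -> psdR S1 -> psdR S2 ->
  S1 \in unitmx -> S2 \in unitmx ->
  S1 *m S1 = B *m ctmx B -> S2 *m S2 = ctmx B *m B ->
  ctmx B *m invmx S1 *m B = S2 ->
  0 <= al -> 0 <= ga -> 0 <= be ->
  (forall v, rd v (A *m v) <= al * rd v (S1 *m v)) ->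
  (forall v, rd v (Cm *m v) <= ga * rd v (S2 *m v)) ->
  (forall g, rd (invmx B *m g) (invmx B *m g) <= be ^+ 2 * rd g g) ->
  forall x y : 'cV[C]_n,
  rd x x + rd y y <= (be * (1 + Num.max al ga)) ^+ 2 *
    (rd (A *m x + B *m y) (A *m x + B *m y) +
     rd (ctmx B *m x - Cm *m y) (ctmx B *m x - Cm *m y)).
Proof.
move=> hA hC Bu hS1 hS2 S1u S2u e1 e2 E1 al0 ga0 be0 hAS hCS hb x y.
have [sA pA] := hA; have [sC pC] := hC.
have [sS1 pS1] := hS1; have [sS2 pS2] := hS2.
have Bsu := ctmx_unit Bu.
have [iB eiB] : {M | M = invmx B} by exists (invmx B).
have [iBs eiBs] : {M | M = invmx (ctmx B)} by exists (invmx (ctmx B)).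
have ciB : ctmx iB = iBs by rewrite eiB eiBs ctmx_inv.
have ciBs : ctmx iBs = iB by rewrite -ciB ctmxK.
have BiB : B *m iB = 1%:M by rewrite eiB mulmxV.
have iBB : iB *m B = 1%:M by rewrite eiB mulVmx.
have BsiBs : ctmx B *m iBs = 1%:M by rewrite eiBs mulmxV.
have iBsBs : iBs *m ctmx B = 1%:M by rewrite eiBs mulVmx.
have E2 : iBs *m S2 *m iB = invmx S1.
  by rewrite -E1 !mulmxA iBsBs mul1mx -mulmxA BiB mulmx1.
have E3 : iB *m S1 *m iBs = invmx S2.
  apply: inv_right => //; rewrite -E1 !mulmxA -(mulmxA _ B iB) BiB mulmx1.
  by rewrite mulmxKV // BsiBs.
have [fa1 fb1 fa2 fb2] := setup Bu hS1 hS2 S1u S2u e1 e2 be0 hb.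
have [u eu] : {u | u = A *m x + B *m y} by exists (A *m x + B *m y).
have [v ev] : {v | v = ctmx B *m x - Cm *m y} by exists (ctmx B *m x - Cm *m y).
rewrite -eu -ev.
have hx : x = iBs *m (v + Cm *m y) by rewrite ev subrK mulmxA iBsBs mul1mx.
have hy : y = iB *m (u - A *m x) by rewrite eu addrAC subrr add0r mulmxA iBB mul1mx.
have iS1 := psd_inv hS1 S1u; have iS2 := psd_inv hS2 S2u.
have Xs_eq : rd x (S1 *m x) = rd (v + Cm *m y) (invmx S2 *m (v + Cm *m y)).
  by rewrite hx rd_mull ciBs !mulmxA E3.
have Ys_eq : rd y (S2 *m y) = rd (u - A *m x) (invmx S1 *m (u - A *m x)).
  by rewrite hy rd_mull ciB !mulmxA E2.
have h1 : Num.sqrt (rd x (S1 *m x)) <=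
    Num.sqrt (rd v (invmx S2 *m v)) + Num.sqrt (ga * rd y (Cm *m y)).
  rewrite Xs_eq; apply: le_trans (psd_triangle _ _ iS2) _; apply: lerD => //.
  apply: ler_wsqrtr; exact: weighted hC hS2 S2u ga0 hCS y.
have h2 : Num.sqrt (rd y (S2 *m y)) <=
    Num.sqrt (rd u (invmx S1 *m u)) + Num.sqrt (al * rd x (A *m x)).
  rewrite Ys_eq; apply: le_trans (psd_triangle u (- (A *m x)) iS1) _; apply: lerD => //.
  apply: ler_wsqrtr; rewrite mulmxN rdNl rdNr opprK; exact: weighted hA hS1 S1u al0 hAS x.
have t1 : rd x u = rd x (A *m x) + rd x (B *m y) by rewrite eu rdDr.
have t2 : rd y v = rd x (B *m y) - rd y (Cm *m y).
  by rewrite ev rdDr rdNr (rd_mulr (ctmx B)) ctmxK [rd (B *m y) x]rdC.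
have t3 : rd x u = rd v (iB *m u) + rd y (Cm *m (iB *m u)).
  by rewrite {1}hx rd_mull ciBs rdDl rd_mull sC.
have t4 : rd y v = rd u (iBs *m v) - rd x (A *m (iBs *m v)).
  by rewrite {1}hy rd_mull ciB rdDl rdNl rd_mull sA.
have t5 : rd v (iB *m u) = rd u (iBs *m v) by rewrite rd_mulr ciB rdC.
have hsum : rd x (A *m x) + rd y (Cm *m y) =
    rd y (Cm *m (iB *m u)) + rd x (A *m (iBs *m v)).
  exact: lin_aux t1 t2 t3 t4 t5.
have P2eq : rd (iB *m u) (S2 *m (iB *m u)) = rd u (invmx S1 *m u).
  by rewrite rd_mull ciB !mulmxA E2.
have Q2eq : rd (iBs *m v) (S1 *m (iBs *m v)) = rd v (invmx S2 *m v).
  by rewrite rd_mull ciBs !mulmxA E3.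
have b1 : rd y (Cm *m (iB *m u)) <=
    Num.sqrt (rd y (Cm *m y)) * Num.sqrt (ga * rd u (invmx S1 *m u)).
  apply: le_trans (CS_sqrt _ _ hC) _.
  apply: ler_pM; rewrite ?sqrtr_ge0 ?lexx //; apply: ler_wsqrtr.
  rewrite -P2eq; exact: hCS.
have b2 : rd x (A *m (iBs *m v)) <=
    Num.sqrt (rd x (A *m x)) * Num.sqrt (al * rd v (invmx S2 *m v)).
  apply: le_trans (CS_sqrt _ _ hA) _.
  apply: ler_pM; rewrite ?sqrtr_ge0 ?lexx //; apply: ler_wsqrtr.
  rewrite -Q2eq; exact: hAS.
have h3 : rd x (A *m x) + rd y (Cm *m y) <=
    Num.sqrt (rd y (Cm *m y)) * Num.sqrt (ga * rd u (invmx S1 *m u)) +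
    Num.sqrt (rd x (A *m x)) * Num.sqrt (al * rd v (invmx S2 *m v)).
  by rewrite hsum; exact: lerD b1 b2.
have [_ pi1] := iS1; have [_ pi2] := iS2.
apply: (final_real (pS1 x) (pS2 y) (pi1 u) (pi2 v) (pA x) (pC y) al0 ga0 be0
  (rd_ge0 u) (rd_ge0 v) h1 h2 h3 (fb1 x) (fb2 y) (fa1 u) (fa2 v)).
Qed.

End Core2.

Section Main.
Variable R : realType.
Local Notation C := (R[i]).

Lemma sqrt_props n (M : 'M[C]_n) :
  hpsd (psd_sqrt (M *m ctmx M)) /\
  psd_sqrt (M *m ctmx M) *m psd_sqrt (M *m ctmx M) = M *m ctmx M.
Proof.
have [S hS] := sqrt_exists M.
exact: (@xgetI _ 0 [set S | hpsd S /\ S *m S = M *m ctmx M] S hS).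
Qed.

Lemma T_sq n (B S : 'M[C]_n) : S \in unitmx -> S *m S = B *m ctmx B ->
  (ctmx B *m invmx S *m B) *m (ctmx B *m invmx S *m B) = ctmx B *m B.
Proof.
move=> Su e; rewrite -!mulmxA (mulmxA B (ctmx B)) -e -mulmxA mulKVmx //.
by rewrite mulKmx.
Qed.

Lemma T_psd n (B S : 'M[C]_n) : psdR S -> S \in unitmx ->
  psdR (ctmx B *m invmx S *m B).
Proof.
move=> hS Su; have [sS _] := hS; have [_ pi] := psd_inv hS Su; split.
  by rewrite !ctmx_mul ctmxK ctmx_inv // sS mulmxA.
move=> v; rewrite -!mulmxA rd_mulr ctmxK; exact: pi.
Qed.

Lemma qpos n (S : 'M[C]_n) : psdR S -> S \in unitmx -> forall x, x != 0 -> 0 < qform S x.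
Proof.
move=> hS Su x xn0; have [_ pS] := hS; rewrite qformE lt_def pS andbT.
apply/eqP => /(psd_zero hS) h; move: xn0; rewrite -(mulKmx Su x) h mulmx0 eqxx.
by [].
Qed.

Lemma qbound n (A S : 'M[C]_n) (be : R) : 0 <= be ->
  (forall x, rd x x <= be * rd x (S *m x)) ->
  exists K, forall x, x != 0 -> qform A x <= K * qform S x.
Proof.
move=> be0 hS; have [K [K0 hK]] := mx_bound A.
exists (Num.sqrt K * be) => x _; rewrite !qformE.
apply: le_trans (CS1 _ _) _.
have h1 : Num.sqrt (rd (A *m x) (A *m x)) <= Num.sqrt K * Num.sqrt (rd x x).
  by rewrite -sqrtrM //; apply: ler_wsqrtr.
apply: le_trans (ler_pM (sqrtr_ge0 _) (sqrtr_ge0 _) (lexx _) h1) _.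
rewrite mulrCA -expr2 sqr_sqrtr ?rd_ge0 // -mulrA.
by apply: ler_wpM2l; [exact: sqrtr_ge0 | exact: hS].
Qed.

End Main.

Unset Implicit Arguments.

Theorem theorem3p3 (R : realType) (n : nat) (A B C : 'M[R[i]]_n) :
  hpsd A -> hpsd C -> B \in unitmx ->
  let H : 'M[R[i]]_(n + n) := block_mx A B (ctmx B) (- C) in
  let alpha := rayleigh_sup A (psd_sqrt (B *m ctmx B)) in
  let gamma := rayleigh_sup C (psd_sqrt (ctmx B *m B)) in
  H \in unitmx /\
  specnorm (invmx H) <= specnorm (invmx B) * (1 + Num.max alpha gamma + alpha * gamma).
Proof.
move=> hA hC Bu; cbv zeta.
have [hS1 e1] := sqrt_props B.
have [hS2 e2'] := sqrt_props (ctmx B).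
rewrite ctmxK in hS2 e2'.
move: hS1 e1 hS2 e2'.
move: (psd_sqrt (B *m ctmx B)) (psd_sqrt (ctmx B *m B)) => S1 S2 hS1 e1 hS2 e2.
have pA := hpsd_psdR hA; have pC := hpsd_psdR hC.
have pS1 := hpsd_psdR hS1; have pS2 := hpsd_psdR hS2.
have Bsu := ctmx_unit Bu.
have S1u : S1 \in unitmx.
  by have := Bu; rewrite -(andbT (B \in unitmx)) -Bsu -unitmx_mul -e1 unitmx_mul => /andP[].
have S2u : S2 \in unitmx.
  by have := Bsu; rewrite -(andbT (ctmx B \in unitmx)) -Bu -unitmx_mul -e2 unitmx_mul => /andP[].
have E1 : ctmx B *m invmx S1 *m B = S2.
  apply: sqrt_uniq; [exact: T_psd | exact: pS2 | by rewrite T_sq // e2].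
have be0 := specnorm_ge0 (invmx B).
move: be0; set be := specnorm (invmx B) => be0.
have hb : forall g, rd (invmx B *m g) (invmx B *m g) <= be ^+ 2 * rd g g.
  move=> g; have h := specnorm_ub (invmx B) g.
  rewrite -(sqr_sqrtr (rd_ge0 (invmx B *m g))) -(sqr_sqrtr (rd_ge0 g)) -exprMn.
  by rewrite !expr2 ler_pM ?sqrtr_ge0.
have [fa1 fb1 fa2 fb2] := setup Bu pS1 pS2 S1u S2u e1 e2 be0 hb.
have qS1 := qpos pS1 S1u; have qS2 := qpos pS2 S2u.
have KA := qbound A be0 fb1; have KC := qbound C be0 fb2.
have al0 : 0 <= rayleigh_sup A S1.
  by apply: rayleigh_ge0 => // x; rewrite qformE; have [_] := pA; apply.
have ga0 : 0 <= rayleigh_sup C S2.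
  by apply: rayleigh_ge0 => // x; rewrite qformE; have [_] := pC; apply.
have hAS : forall v, rd v (A *m v) <= rayleigh_sup A S1 * rd v (S1 *m v).
  by move=> v; rewrite -!qformE; apply: rayleigh_ub.
have hCS : forall v, rd v (C *m v) <= rayleigh_sup C S2 * rd v (S2 *m v).
  by move=> v; rewrite -!qformE; apply: rayleigh_ub.
move: al0 ga0 hAS hCS.
move: (rayleigh_sup A S1) (rayleigh_sup C S2) => al ga al0 ga0 hAS hCS.
have key := core pA pC Bu pS1 pS2 S1u S2u e1 e2 E1 al0 ga0 be0 hAS hCS hb.
set K0 := be * (1 + Num.max al ga).
have K00 : 0 <= K0 by rewrite /K0 mulr_ge0 // addr_ge0 // le_max al0.
have hw : forall w : 'cV[R[i]]_(n + n),
    vnorm w <= K0 * vnorm (block_mx A B (ctmx B) (- C) *m w).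
  move=> w; rewrite -(vsubmxK w) mul_block_col !vnormE !rd_col.
  rewrite mulNmx -{1}(ger0_norm K00) -sqrtr_sqr -sqrtrM ?sqr_ge0 //.
  apply: ler_wsqrtr; exact: key.
have Hu : block_mx A B (ctmx B) (- C) \in unitmx.
  rewrite unitmxE unitfE -det_tr; apply/det0P => -[v vn0 hv].
  have e : block_mx A B (ctmx B) (- C) *m v^T = (v *m (block_mx A B (ctmx B) (- C))^T)^T.
    by rewrite trmx_mul trmxK.
  have v00 : vnorm (0 : 'cV[R[i]]_(n + n)) = 0 by rewrite vnormE rd0r sqrtr0.
  have := hw v^T; rewrite e hv trmx0 v00 mulr0.
  move=> h; have : vnorm v^T = 0 by apply/eqP; rewrite eq_le h vnormE sqrtr_ge0.
  rewrite vnormE => /eqP; rewrite sqrtr_eq0 => hle.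
  have : rd v^T v^T = 0 by apply/eqP; rewrite eq_le hle rd_ge0.
  move=> /rd_eq0 /(congr1 trmx); rewrite trmxK trmx0 => v0.
  by rewrite v0 eqxx in vn0.
split => //.
apply: specnorm_le.
  by rewrite mulr_ge0 // !addr_ge0 ?mulr_ge0 // le_max al0.
move=> z; have := hw (invmx (block_mx A B (ctmx B) (- C)) *m z).
rewrite mulKVmx // => h; apply: le_trans h _.
apply: ler_wpM2r; first by rewrite vnormE sqrtr_ge0.
rewrite /K0 ler_wpM2l // lerDl mulr_ge0 //.
Qed.
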